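(* Let $G=(V,E,C,\ell)$ be an edge-labeled hypergraph with $C=\{1,\dots,k\}$, $k\ge 2$, and maximum hyperedge size $r\ge 2$. Let $(x_v^c,x_e)$ be an optimal solution of the linear program \[ \min \sum_{e\in E} x_e \quad\text{s.t.}\quad \sum_{c=1}^k x_v^c=k-1\ \ \forall v\in V;\qquad x_v^c\le x_e\ \ \forall c\in C,\ \forall e\in E\text{ with }\ell(e)=c,\ \forall v\in e;\qquad 0\le x_v^c\le 1,\ 0\le x_e\le 1. \] Given a parameter $t\in[1/2,2/3]$, define a random clustering $Y$ as follows: draw a uniformly random permutation of $C$, regarded as a priority order on the categories; for each $c$ let $S_c=\{v\in V: x_v^c<t\}$; each node $v$ belonging to at least one $S_c$ is assigned to the highest-priority category $c$ with $v\in S_c$; every node lying in no $S_c$ is assigned to an arbitrary category. Then: if $t=k/(2k-1)$, $\mathbb{E}[\mathrm{CatEdgeClus}(Y)]\le (2-1/k)\cdot\min_{Y'}\mathrm{CatEdgeClus}(Y')$; and if $t=(r+1)/(2r+1)$, $\mathbb{E}[\mathrm{CatEdgeClus}(Y)]\le (2-1/(r+1))\cdot\min_{Y'}\mathrm{CatEdgeClus}(Y')$, where the minima range over all clusterings $Y':V\to C$.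
   Context: An edge-labeled hypergraph $G=(V,E,C,\ell)$ consists of a finite node set $V$, a finite collection $E$ of hyperedges (nonempty subsets of $V$), a finite set $C$ of categories, and a labeling $\ell:E\to C$; the maximum hyperedge size is $r=\max_{e\in E}|e|$. A clustering is a map $Y:V\to C$. For $e\in E$, $m_Y(e)=1$ if $Y[i]\neq\ell(e)$ for some $i\in e$, and $m_Y(e)=0$ otherwise; $\mathrm{CatEdgeClus}(Y)=\sum_{e\in E}m_Y(e)$. *)

(* Defs.v *)
From HB Require Import structures.
From mathcomp Require Import all_boot all_order all_algebra all_fingroup.
Set Implicit Arguments. Unset Strict Implicit. Unset Printing Implicit Defensive.
Import Order.TTheory GRing.Theory Num.Theory.
Local Open Scope ring_scope.

(* An edge-labeled hypergraph with node set V (finType), hyperedges indexed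
   by the finType E (so E may be a multiset of node sets), [edge e] the node
   set of hyperedge e, categories C = 'I_k and labels [lab e]. *)

Definition max_edge_size (V E : finType) (edge : E -> {set V}) : nat :=
  \max_(e : E) #|edge e|.

Definition mY (V E : finType) (k : nat) (edge : E -> {set V}) (lab : E -> 'I_k)
  (Y : V -> 'I_k) (e : E) : nat :=
  if [exists v in edge e, Y v != lab e] then 1%N else 0%N.

Definition CatEdgeClus (V E : finType) (k : nat) (edge : E -> {set V})
  (lab : E -> 'I_k) (Y : V -> 'I_k) : nat :=
  (\sum_(e : E) mY edge lab Y e)%N.

Definition LP_feasible (R : realFieldType) (V E : finType) (k : nat)
  (edge : E -> {set V}) (lab : E -> 'I_k)
  (x : V -> 'I_k -> R) (xe : E -> R) : Prop :=
  [/\ (forall v, \sum_(c : 'I_k) x v c = (k - 1)%:R),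
      (forall e v, v \in edge e -> x v (lab e) <= xe e),
      (forall v c, 0 <= x v c <= 1) &
      (forall e, 0 <= xe e <= 1)].

Definition LP_optimal (R : realFieldType) (V E : finType) (k : nat)
  (edge : E -> {set V}) (lab : E -> 'I_k)
  (x : V -> 'I_k -> R) (xe : E -> R) : Prop :=
  LP_feasible edge lab x xe /\
  forall x' xe', LP_feasible edge lab x' xe' ->
    \sum_(e : E) xe e <= \sum_(e : E) xe' e.

(* The rounding: given a priority permutation s (category c has higher
   priority than c' iff s c < s c'), a threshold t and a fallback assignment
   dflt for nodes in no S_c, node v goes to the highest-priority c with
   x v c < t. *)
Definition round_clustering (R : realFieldType) (V : finType) (k : nat)
  (x : V -> 'I_k -> R) (t : R) (dflt : V -> 'I_k) (s : {perm 'I_k})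
  (v : V) : 'I_k :=
  match [pick c : 'I_k | (x v c < t) &&
           [forall c' : 'I_k, (x v c' < t) ==> (s c <= s c')%N]] with
  | Some c => c
  | None => dflt v
  end.

(* Expected cost over a uniformly random permutation of the categories;
   the arbitrary assignment of uncovered nodes may depend on the permutation. *)
Definition expected_cost (R : realFieldType) (V E : finType) (k : nat)
  (edge : E -> {set V}) (lab : E -> 'I_k)
  (x : V -> 'I_k -> R) (t : R) (dflt : {perm 'I_k} -> V -> 'I_k) : R :=
  (k`!%:R)^-1 * \sum_(s : {perm 'I_k})
     (CatEdgeClus edge lab (round_clustering x t (dflt s) s))%:R.

(* Main.v *)
Require Import Defs.
From HB Require Import structures.
From mathcomp Require Import all_boot all_order all_algebra all_fingroup.
From mathcomp Require Import ring lra zify.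
Set Implicit Arguments. Unset Strict Implicit. Unset Printing Implicit Defensive.
Import Order.TTheory GRing.Theory Num.Theory.
Local Open Scope ring_scope.



Definition Aset (k : nat) (D : {set 'I_k}) (c : 'I_k) : {set {perm 'I_k}} :=
  [set s : {perm 'I_k} | [forall d in D, (s c <= s d)%N]].

Lemma Aset_le k (D : {set 'I_k}) b c : b \in D -> c \in D ->
  (#|Aset D b| <= #|Aset D c|)%N.
Proof.
move=> bD cD.
rewrite -(card_imset (Aset D b) (mulgI (tperm b c))).
apply: subset_leq_card; apply/subsetP => s' /imsetP [s].
rewrite inE => /forallP Hs ->.
rewrite inE; apply/forallP => d; apply/implyP => dD.
rewrite !permM tpermR.
have Hb := implyP (Hs b) bD.
have Hd := implyP (Hs d) dD.
case: (eqVneq d b) => [->|db]; first by rewrite tpermL; exact: (implyP (Hs c) cD).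
case: (eqVneq d c) => [->|dc]; first by rewrite tpermR.
by rewrite tpermD // eq_sym.
Qed.

Lemma Aset_card k (D : {set 'I_k}) c : c \in D ->
  (#|{perm 'I_k}| <= #|D| * #|Aset D c|)%N.
Proof.
move=> cD.
apply: (@leq_trans (\sum_(b in D) #|Aset D b|)); last first.
  rewrite -sum_nat_const; apply: leq_sum => b bD; exact: Aset_le.
rewrite -sum1_card.
have -> : (\sum_(b in D) #|Aset D b| = \sum_(s : {perm 'I_k}) \sum_(b in D) (s \in Aset D b))%N.
  rewrite exchange_big /=; apply: eq_bigr => b _.
  by rewrite -sum1_card big_mkcond /=; apply: eq_bigr => s _; case: (s \in _).
apply: leq_sum => s _.
case: (arg_minnP (fun b => s b) cD) => b bD Hmin.
rewrite (bigD1 b) //=; rewrite inE.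
have -> : [forall d in D, (s b <= s d)%N].
  by apply/forallP => d; apply/implyP => dD; exact: Hmin.
by [].
Qed.



Section S_2.
Variables (R : realFieldType) (V E : finType) (k : nat) (edge : E -> {set V})
  (lab : E -> 'I_k) (x : V -> 'I_k -> R) (xe : E -> R).
Hypothesis feas : LP_feasible edge lab x xe.
Hypothesis k2 : (2 <= k)%N.
Hypothesis ne : forall e, edge e != set0.

Definition Dset t e := [set c : 'I_k | [exists v in edge e, x v c < t]].

Lemma sum1m v : \sum_c (1 - x v c) = 1.
Proof.
case: feas => Hs _ _ _.
rewrite sumrB Hs sumr_const card_ord natrB; last by apply: leq_trans k2.
by rewrite -mulr_natr mul1r opprB addrC subrK.
Qed.

Lemma rest_ge0 v (P : pred 'I_k) : 0 <= \sum_(i | P i) (1 - x v i).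
Proof.
apply: sumr_ge0 => i _.
case: feas => _ _ Hb _; have /andP [_ h] := Hb v i; by rewrite subr_ge0.
Qed.

Lemma two_terms v c1 c2 : c1 != c2 -> (1 - x v c1) + (1 - x v c2) <= 1.
Proof.
move=> n12; have H := sum1m v.
rewrite (bigD1 c1) //= (bigD1 c2) /= in H; last by rewrite eq_sym.
have := rest_ge0 v (fun i => (i != c1) && (i != c2)); lra.
Qed.

Lemma three_terms v c1 c2 c3 : c1 != c2 -> c1 != c3 -> c2 != c3 ->
  (1 - x v c1) + (1 - x v c2) + (1 - x v c3) <= 1.
Proof.
move=> n12 n13 n23; have H := sum1m v.
rewrite (bigD1 c1) //= (bigD1 c2) /= in H; last by rewrite eq_sym.
rewrite (bigD1 c3) /= in H; last by rewrite eq_sym n13 eq_sym n23.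
have := rest_ge0 v (fun i => ((i != c1) && (i != c2)) && (i != c3)); lra.
Qed.

Lemma labD t e : xe e < t -> lab e \in Dset t e.
Proof.
move=> ht; case/set0Pn: (ne e) => v ve.
rewrite inE; apply/existsP; exists v; rewrite ve /=.
case: feas => _ Hc _ _; exact: le_lt_trans (Hc e v ve) ht.
Qed.

Lemma round_ok t e (d : V -> 'I_k) s : xe e < t ->
  s \in Aset (Dset t e) (lab e) ->
  mY edge lab (round_clustering x t d s) e = 0%N.
Proof.
move=> ht; rewrite inE => /forallP HA.
rewrite /mY; case: ifP => //= /existsP [v /andP [ve neq]].
have xvc : x v (lab e) < t.
  by case: feas => _ Hc _ _; exact: le_lt_trans (Hc e v ve) ht.
have inD c' : x v c' < t -> c' \in Dset t e.
  by move=> h; rewrite inE; apply/existsP; exists v; rewrite ve.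
move: neq; rewrite /round_clustering; case: pickP => [c0 /andP [xc0 /forallP Hmin] | H0].
  move=> /eqP H; exfalso; apply: H; apply: (@perm_inj _ s); apply: val_inj; apply/eqP; rewrite /= eqn_leq.
  rewrite (implyP (Hmin (lab e)) xvc) /=.
  exact: (implyP (HA c0) (inD _ xc0)).
have := H0 (lab e); rewrite xvc /=.
suff -> : [forall c' : 'I_k, (x v c' < t) ==> (s (lab e) <= s c')%N] by [].
apply/forallP => c'; apply/implyP => h; exact: (implyP (HA c') (inD _ h)).
Qed.

End S_2.



Lemma alpha_facts (R : realFieldType) (y : R) : 2 <= y ->
  (2 - 1/y) * (y / (2*y - 1)) = 1 /\ (2 - 1/y) * (1 - y / (2*y - 1)) = 1 - 1/y.
Proof.
move=> hy.
have y0 : y != 0 by apply/eqP => h; lra.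
have y1 : 2*y - 1 != 0 by apply/eqP => h; lra.
by split; field; rewrite y0 y1.
Qed.

Section S_3.
Variables (R : realFieldType) (V E : finType) (k : nat) (edge : E -> {set V})
  (lab : E -> 'I_k) (x : V -> 'I_k -> R) (xe : E -> R).
Hypothesis feas : LP_feasible edge lab x xe.
Hypothesis k2 : (2 <= k)%N.
Hypothesis ne : forall e, edge e != set0.

Lemma mY_le1 Y e : (mY edge lab Y e <= 1)%N.
Proof. by rewrite /mY; case: ifP. Qed.

Lemma edge_bound (n : nat) (d : {perm 'I_k} -> V -> 'I_k) e :
  (2 <= n)%N ->
  let t := n%:R / (2 * n - 1)%:R : R in
  (xe e < t -> (#|Dset edge x t e| <= n)%N) ->
  (\sum_(s : {perm 'I_k}) mY edge lab (round_clustering x t (d s) s) e)%:R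
    <= (k`!)%:R * (2 - 1 / n%:R) * xe e.
Proof.
move=> n2 t Hn.
have y2 : (2 : R) <= n%:R by rewrite (ler_nat R 2 n).
have ht : t = n%:R / (2 * n%:R - 1).
  by rewrite /t natrB ?natrM //; apply: leq_trans (_ : 1 <= 2 * 2)%N _ => //; rewrite leq_mul2l.
have [hat ha1] := alpha_facts y2.
rewrite -ht in hat ha1.
have ha0 : 0 <= 2 - 1 / n%:R :> R.
  by rewrite subr_ge0 ler_pdivrMr; lra.
have N0 : 0 <= (k`!)%:R :> R by [].
case: feas => Hs Hc Hb Hxe.
have /andP [xe0 xe1] := Hxe e.
remember (\sum_(s : {perm 'I_k}) mY edge lab (round_clustering x t (d s) s) e)%N as m eqn:Hm.
case: (lerP t (xe e)) => hte.
  have hm : (m <= k`!)%N.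
    rewrite Hm -card_Sn -sum1_card; apply: leq_sum => s _; exact: mY_le1.
  apply: (@le_trans _ _ (k`!)%:R); first by rewrite ler_nat.
  have h1 : 1 <= (2 - 1 / n%:R) * xe e by rewrite -[X in X <= _]hat; exact: ler_wpM2l.
  rewrite -mulrA; move: h1 N0; set u := (_ * xe e); set N := (k`!)%:R; nra.
set D := Dset edge x t e.
set A := Aset D (lab e).
have cD : lab e \in D by exact: (labD feas ne hte).
have hA : (#|{perm 'I_k}| <= #|D| * #|A|)%N by apply: Aset_card.
rewrite card_Sn in hA.
have hmA : (m + #|A| <= k`!)%N.
  have -> : #|A| = (\sum_(s : {perm 'I_k}) (s \in A))%N.
    by rewrite -sum1_card big_mkcond; apply: eq_bigr => s _; case: (s \in A).
  rewrite Hm -card_Sn -sum1_card.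
  rewrite -big_split /=; apply: leq_sum => s _.
  case sA: (s \in A) => /=.
    by rewrite (round_ok feas (d s) hte sA).
  by rewrite addn0; exact: mY_le1.
have hDn := Hn hte.
case: (leqP #|D| 1) => hD1.
  have hm0 : m = 0%N.
    have : (k`! <= #|A|)%N.
      apply: leq_trans hA _; rewrite -{2}(mul1n #|A|) leq_mul2r hD1 orbT //.
    move=> h; apply/eqP; rewrite -leqn0; rewrite -(leq_add2r #|A|).
    by apply: leq_trans hmA _; rewrite add0n.
  rewrite hm0 /=; apply: mulr_ge0 => //; exact: mulr_ge0.
have [c' c'D c'ne] : exists2 c', c' \in D & c' != lab e.
  have : (0 < #|D :\ lab e|)%N by move: hD1; rewrite (cardsD1 (lab e) D) cD add1n ltnS.
  case/card_gt0P => c'; rewrite in_setD1 => /andP [h1 h2]; by exists c'.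
move: c'D; rewrite inE => /existsP [v /andP [ve xvc']].
have hxv : 1 - t < xe e.
  have ne' : lab e != c' by rewrite eq_sym.
  have h := @two_terms _ _ _ _ _ _ _ _ feas k2 v (lab e) c' ne'.
  have := Hc e v ve; lra.
have hmr : m%:R <= (k`!)%:R - (#|A|)%:R :> R.
  have hAN : (#|A| <= k`!)%N by apply: leq_trans hmA; exact: leq_addl.
  by rewrite -natrB // ler_nat leq_subRL // addnC.
have hAr : (k`!)%:R <= n%:R * (#|A|)%:R :> R.
  rewrite -natrM ler_nat; apply: leq_trans hA _; rewrite leq_mul2r hDn orbT //.
apply: le_trans hmr _.
apply: le_trans (_ : (k`!)%:R * (2 - 1 / n%:R) * (1 - t) <= _); last first.
  rewrite ler_wpM2l //; [exact: mulr_ge0 | exact: ltW].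
rewrite -mulrA ha1.
have : (k`!)%:R / n%:R <= (#|A|)%:R :> R.
  by rewrite ler_pdivrMr; [rewrite mulrC | lra].
move=> h; rewrite mulrBr mulr1 mulrA mulr1; lra.
Qed.

End S_3.



Section S_4.
Variables (R : realFieldType) (V E : finType) (k : nat) (edge : E -> {set V})
  (lab : E -> 'I_k) (x : V -> 'I_k -> R) (xe : E -> R).
Hypothesis feas : LP_feasible edge lab x xe.
Hypothesis k2 : (2 <= k)%N.
Hypothesis ne : forall e, edge e != set0.

Lemma D_card_edge t e : xe e < t -> 3 * t <= 2 ->
  (#|Dset edge x t e| <= #|edge e|.+1)%N.
Proof.
move=> hte t23.
set D := Dset edge x t e.
have cD : lab e \in D by exact: (labD feas ne hte).
rewrite (cardsD1 (lab e) D) cD add1n ltnS.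
case/set0Pn: (ne e) => v0 _.
pose f c := if [pick v in edge e | x v c < t] is Some v then v else v0.
have fP c : c \in D -> f c \in edge e /\ x (f c) c < t.
  rewrite inE => /existsP [w /andP [we xw]].
  rewrite /f; case: pickP => [v /andP [ve xv] | H] //.
  by have := H w; rewrite we xw.
have inj : {in D :\ lab e &, injective f}.
  move=> c1 c2; rewrite !in_setD1 => /andP [n1 D1] /andP [n2 D2] feq.
  apply/eqP; apply/negPn/negP => n12.
  have [ve1 x1] := fP _ D1; have [ve2 x2] := fP _ D2.
  rewrite -feq in x2.
  have h := @three_terms _ _ _ _ _ _ _ _ feas k2 (f c1) (lab e) c1 c2.
  have m1 : lab e != c1 by rewrite eq_sym.
  have m2 : lab e != c2 by rewrite eq_sym.
  have := h m1 m2 n12.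
  case: feas => _ Hc _ _; have := Hc e (f c1) ve1; lra.
rewrite -(card_in_imset inj); apply: subset_leq_card; apply/subsetP => v.
case/imsetP => c; rewrite in_setD1 => /andP [_ cD'] ->.
by case: (fP _ cD').
Qed.
End S_4.



Lemma lp_le (R : realFieldType) (V E : finType) (k : nat)
  (edge : E -> {set V}) (lab : E -> 'I_k)
  (x : V -> 'I_k -> R) (xe : E -> R) (Y' : V -> 'I_k) :
  (1 <= k)%N -> LP_optimal edge lab x xe ->
  \sum_e xe e <= (CatEdgeClus edge lab Y')%:R.
Proof.
move=> k1 [_ Hopt].
rewrite /CatEdgeClus natr_sum.
apply: (Hopt (fun v c => ((c != Y' v) : nat)%:R) (fun e => (mY edge lab Y' e)%:R)).
split.
- move=> v; rewrite -natr_sum; congr (_%:R).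
  have -> : (\sum_(c : 'I_k) ((c != Y' v) : nat) = \sum_(c in predC1 (Y' v)) 1)%N.
    by rewrite [RHS]big_mkcond; apply: eq_bigr => c _; rewrite /= inE; case: (c != Y' v).
  by rewrite sum1_card cardC1 card_ord subn1.
- move=> e v ve; rewrite ler_nat /mY.
  case: eqP => //= h; case: ifP => // /negbT/existsPn/(_ v).
  by rewrite ve /= negbK => /eqP h'; case: h; rewrite h'.
- move=> v c; case: (c != Y' v) => /=; rewrite ?mulr1n ?mulr0n ?lexx ?ler01 //.
- by move=> e; rewrite /mY; case: ifP => _ /=; rewrite ?mulr1n ?mulr0n ?lexx ?ler01.
Qed.

Lemma main_gen (R : realFieldType) (V E : finType) (k : nat)
  (edge : E -> {set V}) (lab : E -> 'I_k)
  (x : V -> 'I_k -> R) (xe : E -> R)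
  (dflt : {perm 'I_k} -> V -> 'I_k) (n : nat) (t : R) (Y' : V -> 'I_k) :
  (2 <= k)%N -> (forall e, edge e != set0) -> LP_optimal edge lab x xe ->
  (2 <= n)%N -> t = n%:R / (2 * n - 1)%:R ->
  (forall e, xe e < t -> (#|Dset edge x t e| <= n)%N) ->
  expected_cost edge lab x t dflt <= (2 - 1 / n%:R) * (CatEdgeClus edge lab Y')%:R.
Proof.
move=> k2 ne Hopt n2 ht HD.
have feas := Hopt.1.
have ha0 : 0 <= 2 - 1 / n%:R :> R.
  have y2 : (2 : R) <= n%:R by rewrite (ler_nat R 2 n).
  by rewrite subr_ge0 ler_pdivrMr; lra.
have N0 : 0 < (k`!)%:R :> R by rewrite ltr0n fact_gt0.
rewrite /expected_cost.
rewrite ler_pdivrMl //.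
apply: (@le_trans _ _ ((k`!)%:R * (2 - 1 / n%:R) * \sum_e xe e)); last first.
  rewrite -mulrA ler_pM2l //; apply: ler_wpM2l => //.
  exact: lp_le (ltnW k2) Hopt.
rewrite /CatEdgeClus.
under eq_bigr do rewrite natr_sum.
rewrite exchange_big /= mulr_sumr.
apply: ler_sum => e _.
  subst t; rewrite -natr_sum; exact: (edge_bound feas k2 ne _ n2 (HD e)).
Qed.

Unset Implicit Arguments.
Theorem mainTheorem6 (R : realFieldType) (V E : finType) (k : nat)
  (edge : E -> {set V}) (lab : E -> 'I_k)
  (x : V -> 'I_k -> R) (xe : E -> R)
  (dflt : {perm 'I_k} -> V -> 'I_k) :
  (2 <= k)%N ->
  (forall e, edge e != set0) ->
  (2 <= max_edge_size edge)%N ->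
  LP_optimal edge lab x xe ->
  (forall Y' : V -> 'I_k,
     expected_cost edge lab x (k%:R / (2 * k - 1)%:R) dflt
       <= (2 - 1 / k%:R) * (CatEdgeClus edge lab Y')%:R) /\
  (forall Y' : V -> 'I_k,
     expected_cost edge lab x
       ((max_edge_size edge + 1)%:R / (2 * max_edge_size edge + 1)%:R) dflt
       <= (2 - 1 / (max_edge_size edge + 1)%:R) * (CatEdgeClus edge lab Y')%:R).
Proof.
move=> k2 ne r2 Hopt; split => Y'.
  apply: (@main_gen R V E k edge lab x xe dflt k) => // e _.
  by apply: leq_trans (max_card _) _; rewrite card_ord.
set r := max_edge_size edge.
have feas := Hopt.1.
have e1 : (2 * (r + 1) - 1 = 2 * r + 1)%N by lia.
apply: (@main_gen R V E k edge lab x xe dflt (r + 1)) => //.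
- by rewrite addn1 ltnS; apply: leq_trans r2.
- by rewrite e1.
move=> e hte.
have t23 : 3 * ((r + 1)%:R / (2 * r + 1)%:R) <= 2 :> R.
  have r2' : (2 : R) <= r%:R by rewrite (ler_nat R 2 r).
  rewrite mulrA ler_pdivrMr; last by rewrite ltr0n addn1.
  rewrite !natrD ?natrM; lra.
apply: leq_trans (D_card_edge feas k2 ne hte t23) _.
rewrite addn1 ltnS; exact: (leq_bigmax e).
Qed.

Print Assumptions mainTheorem6.
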